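(* Let $a,b\ge 0$ and $n=a+b$. There is a bijection $g:\mathcal Y_{a,b}\to\mathcal Y_{a,b}$ such that for every $P\in\mathcal Y_{a,b}$, $$\mathrm{Peak}(P)=\mathrm{hd}(g(P))\qquad\text{and}\qquad \mathrm{Peak}^*(P)=\mathrm{hd}^*(g(P)).$$
   Context: $\mathcal Y_{a,b}$ is the set of lattice paths with unit steps $N$ and $E$ from $(0,0)$ to $(b,a)$ (so $a$ steps $N$ and $b$ steps $E$); each such path is identified with the Young diagram $\lambda$ fitting in the $a\times b$ rectangle (placed against its upper and left sides) whose southeast boundary is the path. Label the vertices of $P$ by $0,1,\dots,n$ starting from the origin. A peak is an occurrence of consecutive steps $NE$; $\mathrm{Peak}(P)$ is the set of labels of the vertices lying between the $N$ and the $E$ of a peak. $\mathrm{Peak}^*(P)=\mathrm{Peak}(PE)$, where $PE$ is $P$ followed by an extra $E$ step; thus $\mathrm{Peak}^*(P)=\mathrm{Peak}(P)\cup\{n\}$ if $P$ ends with $N$ and $\mathrm{Peak}(P)$ otherwise. The hook decomposition $\mathrm{hd}(P)$ of the diagram $\lambda$ with rows $\lambda_1\ge\lambda_2\ge\cdots$, conjugate $\lambda'$, and Durfee square of side $d$ (largest $d$ with $\lambda_d\ge d$) is the set $\{\lambda_i+\lambda'_i-2i+1: 1\le i\le d\}$, i.e. the sizes of the hooks obtained by successively peeling off the largest hook (first row and first column). $\mathrm{hd}^*(P)=\mathrm{hd}(P)\cup\{n\}$ if $P$ begins with an $N$ step, and $\mathrm{hd}^*(P)=\mathrm{hd}(P)$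 otherwise. *)

(* Defs.v *)
From mathcomp Require Import all_boot.
Set Implicit Arguments. Unset Strict Implicit. Unset Printing Implicit Defensive.

(* A lattice path is a sequence of steps; [true] = N step, [false] = E step.
   Step number j (0-indexed) goes from vertex j to vertex j+1. *)

Definition Ypath (a b : nat) :=
  {p : seq bool | (count id p == a) && (count negb p == b)}.

Definition Peak (p : seq bool) : seq nat :=
  [seq j.+1 | j <- iota 0 (size p) &
     (nth false p j == true) && (nth true p j.+1 == false)].

Definition Peak_star (p : seq bool) : seq nat := Peak (rcons p false).

Fixpoint ecounts (e : nat) (p : seq bool) : seq nat :=
  match p with
  | [::] => [::]
  | true :: q => e :: ecounts e q
  | false :: q => ecounts e.+1 q
  end.

(* The Young diagram (rows lambda_1 >= lambda_2 >= ... , from the top) in the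
   a x b rectangle, against its upper and left sides, whose southeast boundary
   is the path: row i (from the top) has length = number of E steps before the
   (a-i+1)-th N step. Zero rows are kept (harmless). *)
Definition shape (p : seq bool) : seq nat := rev (ecounts 0 p).

(* lambda_i, 1-indexed *)
Definition part (lam : seq nat) (i : nat) : nat := nth 0 lam i.-1.

Definition conjpart (lam : seq nat) (j : nat) : nat := count (fun x => j <= x) lam.

Definition durfee (lam : seq nat) : nat :=
  \max_(0 <= d < (size lam).+1 | d <= part lam d) d.

Definition hd (p : seq bool) : seq nat :=
  let lam := shape p in
  [seq (part lam i + conjpart lam i).+1 - i.*2 | i <- iota 1 (durfee lam)].

Definition hd_star (p : seq bool) : seq nat :=
  if head false p then rcons (hd p) (size p) else hd p.

(* Main.v *)
From mathcomp Require zify.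
Require Import Defs.
From mathcomp Require Import all_boot.
From Stdlib Require Import Lia.
Set Implicit Arguments. Unset Strict Implicit. Unset Printing Implicit Defensive.

Lemma ecounts_cat e s1 s2 :
  ecounts e (s1 ++ s2) = ecounts e s1 ++ ecounts (e + count negb s1) s2.
Proof.
elim: s1 e => [|[] s1 IH] e /=; first by rewrite addn0.
  by rewrite IH.
by rewrite IH addSnnS.
Qed.

Lemma ecounts_false e q : ecounts e (nseq q false) = [::].
Proof. by elim: q e => //= q IH e; rewrite IH. Qed.

Lemma ecounts_true e p : ecounts e (nseq p true) = nseq p e.
Proof. by elim: p => //= p ->. Qed.

Lemma ecounts_add e e' s : ecounts (e + e') s = map (addn e) (ecounts e' s).
Proof.
elim: s e' => [|[] s IH] e' //=; first by rewrite IH.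
by rewrite -addnS IH.
Qed.

Lemma ecounts_le e s : all (fun x => x <= e + count negb s) (ecounts e s).
Proof.
elim: s e => [|[] s IH] e //=.
  by rewrite leq_addr IH.
by rewrite -addSnnS; apply: IH.
Qed.

Lemma size_ecounts e s : size (ecounts e s) = count id s.
Proof. by elim: s e => [|[] s IH] e //=; rewrite IH. Qed.

Definition hdl (lam : seq nat) : seq nat :=
  [seq (part lam i + conjpart lam i).+1 - i.*2 | i <- iota 1 (durfee lam)].

Lemma hd_hdl p : hd p = hdl (Defs.shape p). Proof. by []. Qed.

Lemma durfeeA lam : durfee lam <= part lam (durfee lam) /\ durfee lam <= size lam.
Proof.
rewrite /durfee; apply/andP; rewrite big_seq_cond.
elim/big_ind: _ => //.
  move=> x y /andP[h1 h2] /andP[h3 h4].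
  by case: (leqP x y) => H; rewrite ?h1 ?h2 ?h3 ?h4.
move=> i /andP[]; rewrite mem_index_iota => /andP[_ Hi] ->.
by rewrite -ltnS Hi.
Qed.

Lemma durfeeB lam d : d <= size lam -> d <= part lam d -> d <= durfee lam.
Proof.
move=> H1 H2; rewrite /durfee.
apply: (@leq_bigmax_seq _ _ (fun d => d <= part lam d) (fun d => d) d) => //.
by rewrite mem_index_iota; lia.
Qed.

Lemma durfeeC lam m : (forall d, d <= size lam -> d <= part lam d -> d <= m) -> durfee lam <= m.
Proof.
move=> H; apply/bigmax_leqP_seq => i; rewrite mem_index_iota ltnS => /andP[_ Hi] Hp.
exact: H.
Qed.

Lemma nth_SL L p j :
  nth 0 (map S L ++ nseq p 0) j = if j < size L then (nth 0 L j).+1 else 0.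
Proof.
rewrite nth_cat size_map; case: ifP => H; first by rewrite (nth_map 0).
by rewrite nth_nseq; case: ifP.
Qed.

Lemma nth_L L p j :
  nth 0 (L ++ nseq p 0) j = if j < size L then nth 0 L j else 0.
Proof.
rewrite nth_cat; case: ifP => H //.
by rewrite nth_nseq; case: ifP.
Qed.

Section Lam.
Variables (c p : nat) (L : seq nat).
Hypothesis HL : all (fun x => x <= c) L.
Local Notation lam := (c.+1 :: map S L ++ nseq p 0).
Local Notation mu := (L ++ nseq p 0).

Lemma part_lam i : 1 <= i -> part lam i.+1 = if i.-1 < size L then (part mu i).+1 else 0.
Proof.
case: i => // i _; rewrite /part /=  nth_SL nth_L.
by case: ifP.
Qed.

Lemma dm_range : 1 <= durfee mu -> (durfee mu).-1 < size L /\ durfee mu <= c.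
Proof.
move=> H; have [H1 H2] := durfeeA mu.
move: H1; rewrite /part  nth_L.
case: ifP => Hs; last by lia.
move=> H3; split=> //.
apply: (leq_trans H3); exact: (allP HL _ (mem_nth 0 Hs)).
Qed.

Lemma durfee_lam : durfee lam = (durfee mu).+1.
Proof.
have [A1 A2] := durfeeA mu.
apply/eqP; rewrite eqn_leq; apply/andP; split.
  apply: durfeeC => d Hd Hp.
  case: d Hd Hp => // [[|i]] Hd Hp //.
  have : part lam i.+2 = part lam i.+2 by [].
  rewrite {2}part_lam //=; case: ifP => Hs Hq; last by move: Hp; rewrite Hq.
  rewrite ltnS; apply: durfeeB.
    by move: Hd; rewrite   /= !size_cat size_map; lia.
  by move: Hp; rewrite Hq.
apply: durfeeB.
  by move: A2; rewrite   /= !size_cat size_map; lia.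
case E: (durfee mu) => [|dm]; first by rewrite /part /=.
rewrite part_lam //.
have [R1 _] := dm_range (ltac:(lia)).
rewrite E /= in R1; rewrite R1 ltnS -E; lia.
Qed.

Lemma hdl_lam : hdl lam = (c + size L).+1 :: hdl mu.
Proof.
rewrite /hdl durfee_lam /= (iotaDl 1 1) -map_comp.
congr (_ :: _).
  rewrite /part /conjpart /= count_cat count_map count_nseq /= /=.
  have -> : count (preim S (fun x => 0 < x)) L = size L.
    by rewrite -[RHS]count_predT; apply: eq_count.
  lia.
apply/eq_in_map => i; rewrite mem_iota => /andP[Hi1 Hi2] /=.
have Hdm : 1 <= durfee mu by lia.
have [R1 R2] := dm_range Hdm.
have Hs : i.-1 < size L by lia.
rewrite add1n (part_lam Hi1) Hs.
have -> : conjpart (map S L ++ nseq p 0) i.+1 = conjpart mu i.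
  rewrite /conjpart !count_cat count_map !count_nseq /=.
  have -> : (i <= 0) = false by lia.
  by rewrite !mul0n.
have -> : (i < c.+1) = true by lia.
lia.
Qed.
End Lam.

Lemma shape_ins p q R :
  Defs.shape (nseq p true ++ false :: R ++ true :: nseq q false) =
  (count negb R).+1 :: map S (rev (ecounts 0 R)) ++ nseq p 0.
Proof.
rewrite /Defs.shape ecounts_cat ecounts_true count_nseq /=.
rewrite ecounts_cat /= ecounts_false rev_cat /= rev_cat rev_nseq.
rewrite (ecounts_add 1 0) map_rev add1n.
by congr (_ :: rev _ ++ _); apply: eq_map => x; rewrite add1n.
Qed.

Lemma shape_del p q R :
  Defs.shape (nseq p true ++ R ++ nseq q false) = rev (ecounts 0 R) ++ nseq p 0.
Proof.
rewrite /Defs.shape ecounts_cat ecounts_true count_nseq /=.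
by rewrite ecounts_cat ecounts_false cats0 rev_cat rev_nseq.
Qed.

Lemma hd_ins p q R :
  hd (nseq p true ++ false :: R ++ true :: nseq q false) =
  (size R).+1 :: hd (nseq p true ++ R ++ nseq q false).
Proof.
rewrite !hd_hdl shape_ins shape_del hdl_lam.
  by rewrite size_rev size_ecounts addnC (count_predC id).
rewrite all_rev; exact: ecounts_le.
Qed.

Lemma hd_base a b : hd (nseq a true ++ nseq b false) = [::].
Proof.
rewrite hd_hdl /Defs.shape ecounts_cat ecounts_true ecounts_false cats0 rev_nseq.
rewrite /hdl.
suff -> : durfee (nseq a 0) = 0 by [].
apply/eqP; rewrite -leqn0; apply: durfeeC => d _.
by rewrite /part nth_nseq; case: ifP.
Qed.

Definition gseq a b (cs : seq (nat * nat)) : seq bool :=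
  mkseq (fun t => if t < a then (a - t) \notin map snd cs
                  else (t - a) \in map fst cs) (a + b).

Lemma size_gseq a b cs : size (gseq a b cs) = a + b.
Proof. by rewrite size_mkseq. Qed.

Lemma nth_gseq a b cs t : t < a + b ->
  nth false (gseq a b cs) t = if t < a then (a - t) \notin map snd cs
                  else (t - a) \in map fst cs.
Proof. by move=> H; rewrite nth_mkseq. Qed.

Lemma gseq_nil a b : gseq a b [::] = nseq a true ++ nseq b false.
Proof.
apply: (@eq_from_nth _ false); first by rewrite size_gseq size_cat !size_nseq.
move=> t; rewrite size_gseq => H; rewrite nth_gseq // nth_cat size_nseq !nth_nseq.
case: ifP => // H1; case: ifP => //; lia.
Qed.

Lemma notin_big (s : seq nat) v y : all (fun u => u < y) s -> y <= v -> (v \in s) = false.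
Proof.
move=> /allP H Hv; apply/negP => /H; lia.
Qed.

Lemma gseq_rcons a b cs x y :
  all (fun c => c.1 < x) cs -> all (fun c => c.2 < y) cs -> x < b -> 0 < y <= a ->
  exists R,
    gseq a b (rcons cs (x, y)) = nseq (a - y) true ++ false :: R ++ true :: nseq (b.-1 - x) false
  /\ gseq a.-1 b.-1 cs = nseq (a - y) true ++ R ++ nseq (b.-1 - x) false.
Proof.
move=> Hx Hy Hxb Hya.
have HX : all (fun u => u < x) (map fst cs) by rewrite all_map.
have HY : all (fun u => u < y) (map snd cs) by rewrite all_map.
set Q' := gseq a.-1 b.-1 cs.
exists (mkseq (fun s => nth false Q' (s + (a - y))) (x + y - 1)).
split.
  apply: (@eq_from_nth _ false).
    rewrite size_gseq /= !size_cat /= size_cat /= !size_nseq size_mkseq; lia.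
  move=> t; rewrite size_gseq => Ht; rewrite nth_gseq // !map_rcons !mem_rcons !in_cons.
  rewrite nth_cat size_nseq nth_nseq.
  case: (ltnP t (a - y)) => H1.
    by rewrite (notin_big HY); [rewrite ifT; [|lia]; have -> : (a - t == y) = false by lia | lia].
  case: (eqVneq t (a - y)) => [->|H2].
    by rewrite subnn /= ifT; [rewrite subKn ?eqxx; lia | lia].
  have -> : t - (a - y) = (t - (a - y)).-1.+1 by lia.
  rewrite /= nth_cat size_mkseq.
  case: (ltnP (t - (a - y)).-1 (x + y - 1)) => H3.
    rewrite nth_mkseq // /Q' nth_gseq; last lia.
    have -> : (t - (a - y)).-1 + (a - y) = t.-1 by lia.
    case: (ltnP t a) => H4.
      rewrite ifT; last lia.
      have -> : a.-1 - t.-1 = a - t by lia.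
      by have -> : (a - t == y) = false by lia.
    rewrite ifF; last lia.
    have -> : t.-1 - a.-1 = t - a by lia.
    by have -> : (t - a == x) = false by lia.
  rewrite ifF; last lia.
  case: (eqVneq (t - (a - y)).-1 (x + y - 1)) => [E|E].
    by rewrite E subnn /=; have -> : (t - a == x) = true by lia.
  have -> : (t - (a - y)).-1 - (x + y - 1) = (t - (a - y)).-1 - (x + y - 1) - 1 + 1 by lia.
  rewrite addn1 /= nth_nseq if_same (notin_big HX); last lia.
  by have -> : (t - a == x) = false by lia.
apply: (@eq_from_nth _ false).
  rewrite size_gseq /= !size_cat !size_nseq size_mkseq; lia.
move=> t; rewrite size_gseq => Ht; rewrite nth_gseq //.
rewrite nth_cat size_nseq nth_nseq.
case: (ltnP t (a - y)) => H1.
  by rewrite ifT; [rewrite (notin_big HY) //; lia | lia].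
rewrite nth_cat size_mkseq.
case: (ltnP (t - (a - y)) (x + y - 1)) => H3.
  rewrite nth_mkseq // /Q' nth_gseq; last lia.
  by have -> : t - (a - y) + (a - y) = t by lia.
rewrite nth_nseq if_same ifF; last lia.
rewrite (notin_big HX) //; lia.
Qed.

Definition inv_ok a b (cs : seq (nat * nat)) :=
  [&& pairwise ltn (map fst cs), pairwise ltn (map snd cs),
      all (fun c => c.1 < b) cs & all (fun c => 0 < c.2 <= a) cs].

Lemma gseq_main cs : forall a b, inv_ok a b cs ->
  hd (gseq a b cs) = rev (map (fun c => c.1 + c.2) cs) /\
  count id (gseq a b cs) = a /\ count negb (gseq a b cs) = b.
Proof.
elim/last_ind: cs => [|cs [x y] IH] a b.
  move=> _; rewrite gseq_nil hd_base !count_cat !count_nseq /=; split=> //; lia.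
rewrite /inv_ok !map_rcons !pairwise_rcons !all_rcons /= => /and4P[/andP[H1 H2] /andP[H3 H4] /andP[H5 H6] /andP[H7 H8]].
have Hx : all (fun c => c.1 < x) cs by rewrite all_map in H1.
have Hy : all (fun c => c.2 < y) cs by rewrite all_map in H3.
have [R [E1 E2]] := gseq_rcons Hx Hy H5 H7.
have Hok : inv_ok a.-1 b.-1 cs.
  rewrite /inv_ok H2 H4 /=; apply/andP; split.
    apply/allP => c Hc; have := allP Hx c Hc; lia.
  apply/allP => c Hc; have := allP Hy c Hc; have := allP H8 c Hc; lia.
have [IH1 [IH2 IH3]] := IH _ _ Hok.
have HsR : size R = x + y - 1.
  have := size_gseq a b (rcons cs (x, y)); rewrite E1 /= !size_cat /= size_cat !size_nseq => H; rewrite /= size_nseq in H; lia.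
rewrite E1 hd_ins -E2 IH1 rev_rcons HsR /=.
split; first by congr (_ :: _); lia.
move: IH2 IH3; rewrite E2 !count_cat /= !count_cat /= !count_nseq /=; lia.
Qed.

Fixpoint cor (pN : bool) (e m : nat) (s : seq bool) : seq (nat * nat) :=
  match s with
  | [::] => [::]
  | true :: s' => cor true e m.+1 s'
  | false :: s' => if pN then (e, m) :: cor false e.+1 m s' else cor false e.+1 m s'
  end.

Lemma Peak_cons x p :
  Peak (x :: p) = (if x && (nth true p 0 == false) then [:: 1] else [::]) ++ map S (Peak p).
Proof.
rewrite /Peak /= (iotaDl 1 0) filter_map.
by case: x; case: (nth true p 0 == false); rewrite /= -?map_comp.
Qed.


Arguments Peak : simpl never.

Lemma cor_sum pN e m s :
  map (fun c => c.1 + c.2) (cor pN e m s) =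
  map (addn (e + m)) ((if pN && (nth true s 0 == false) then [:: 0] else [::]) ++ Peak s).
Proof.
elim: s pN e m => [|[] s IH] pN e m.
- by case: pN.
- rewrite /= IH Peak_cons andbF /= !map_cat -map_comp.
  case: (nth true s 0 == false) => /=; [congr (_ :: _); first lia|];
  by apply: eq_map => v /=; lia.
- rewrite /= Peak_cons /= !map_cat -map_comp.
  case: pN => /=; rewrite IH /= ?map_cat; [congr (_ :: _); first lia|];
  by apply: eq_map => v /=; lia.
Qed.

Lemma cor_inv pN e m s :
  let cs := cor pN e m s in
  [/\ pairwise ltn (map fst cs), pairwise ltn (map snd cs),
      all (fun c => e <= c.1 < e + count negb s) cs &
      all (fun c => m + ~~ pN <= c.2 <= m + count id s) cs].
Proof.
elim: s pN e m => [|[] s IH] pN e m /=; first by split.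
- have [A B C D] := IH true e m.+1.
  split=> //.
  apply/allP => c Hc; have := allP D c Hc; case: pN => /=; lia.
- have [A B C D] := IH false e.+1 m.
  have C' : all (fun c => e <= c.1 < e + (count negb s).+1) (cor false e.+1 m s).
    apply/allP => c Hc; have := allP C c Hc; lia.
  have D' : all (fun c => m + ~~ pN <= c.2 <= m + count id s) (cor false e.+1 m s).
    apply/allP => c Hc; have := allP D c Hc; case: pN => /=; lia.
  case: pN D' => D' /=; last by split.
  split.
  + rewrite A andbT all_map; apply/allP => c Hc; have := allP C c Hc => /=; lia.
  + rewrite B andbT all_map; apply/allP => c Hc; have := allP D c Hc => /=; lia.
  + by rewrite C' /=; lia.
  + by rewrite D' /=; lia.
Qed.

Lemma Peak_nil : Peak [::] = [::]. Proof. by []. Qed.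

Lemma Peak_rcons p :
  Peak (rcons p false) = Peak p ++ (if last false p then [:: size p] else [::]).
Proof.
elim: p => [|x p IH]; first by [].
rewrite rcons_cons !Peak_cons IH map_cat catA /=.
case: p IH => [|y p] IH /=.
  by case: x.
by case: (last y p).
Qed.

Lemma last_noN s : ~~ has id s -> last false s = false.
Proof. by elim: s => //= -[] s IH //= /IH. Qed.

Lemma cor_last pN e m s :
  (m + count id s \in map snd (cor pN e m s)) =
  (pN || has id s) && (s != [::]) && ~~ last false s.
Proof.
elim: s pN e m => [|[] s IH] pN e m; first by rewrite andbF.
- by rewrite /= addnA addn1 IH orbT; case: s {IH}.
- rewrite /=; case: pN => /=.
    rewrite add0n in_cons IH /= -{2}[m]addn0 eqn_add2l.
    case: (boolP (has id s)) => H /=.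
      have -> : (count id s == 0) = false by apply/eqP => H0; move: H; rewrite has_count H0.
      by case: s H {IH}.
    have -> : (count id s == 0) = true by rewrite eqn0Ngt -has_count H.
    by rewrite last_noN.
  by rewrite add0n IH; case: s {IH}.
Qed.

Lemma cor_true_shape e m s :
  cor true e m s = [::] \/ exists m' r, cor true e m s = (e, m') :: r.
Proof.
elim: s m => [|[] s IH] m /=; first by left.
  exact: IH.
by right; exists m, (cor false e.+1 m s).
Qed.

Lemma cor_true_nil e m s : cor true e m s = [::] -> count negb s = 0.
Proof. by elim: s m => [|[] s IH] m //= /IH. Qed.

Lemma size0_counts (s : seq bool) : count id s = 0 -> count negb s = 0 -> s = [::].
Proof. by case: s => // -[] s. Qed.

Lemma cor_mixed pN e m s1 s2 :
  cor pN e m (false :: s1) = cor pN e m (true :: s2) -> count negb s2 = (count negb s1).+1 -> False.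
Proof.
rewrite /=.
have [_ _ C _] := cor_inv false e.+1 m s1.
have [_ _ _ D] := cor_inv true e m.+1 s2.
case: pN => /= E.
  have : (e, m) \in cor true e m.+1 s2 by rewrite -E mem_head.
  move/(allP D) => /=; lia.
case: (cor_true_shape e m.+1 s2) => [E2|[m' [r E2]]].
  by move: (cor_true_nil E2) => ->.
have : (e, m') \in cor false e.+1 m s1 by rewrite E E2 mem_head.
move/(allP C) => /=; lia.
Qed.

Lemma cor_inj s : forall s' pN e m, cor pN e m s = cor pN e m s' ->
  count id s = count id s' -> count negb s = count negb s' -> s = s'.
Proof.
elim: s => [|x s IH] [|y s'] pN e m E Hi Hn.
- by [].
- by symmetry; apply: size0_counts.
- by apply: size0_counts.
case: x y E Hi Hn => [] [] /= E Hi Hn.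
- by congr (_ :: _); apply: (IH _ true e m.+1) => //; lia.
- by exfalso; apply: (cor_mixed (esym E)); lia.
- by exfalso; apply: (cor_mixed E); lia.
- congr (_ :: _); apply: (IH _ false e.+1 m) => //; last lia.
  by case: pN E => // -[].
Qed.

Lemma pw_eq (s1 s2 : seq nat) : pairwise ltn s1 -> pairwise ltn s2 -> s1 =i s2 -> s1 = s2.
Proof.
rewrite -!(sorted_pairwise ltn_trans) => H1 H2 H.
exact: (irr_sorted_eq ltn_trans ltnn).
Qed.

Lemma gseq_inj a b cs cs' : inv_ok a b cs -> inv_ok a b cs' -> gseq a b cs = gseq a b cs' -> cs = cs'.
Proof.
move=> /and4P[A1 A2 A3 A4] /and4P[B1 B2 B3 B4] E.
have EX : map fst cs = map fst cs'.
  apply: pw_eq => // v.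
  case: (ltnP v b) => Hv.
    have := congr1 (fun s => nth false s (a + v)) E.
    rewrite !nth_gseq; try lia.
    have -> : (a + v < a) = false by lia.
    by rewrite addKn.
  rewrite !(@notin_big _ v b) //; rewrite all_map; apply/allP => c Hc /=.
    by have := allP B3 c Hc; lia.
  by have := allP A3 c Hc; lia.
have EY : map snd cs = map snd cs'.
  apply: pw_eq => // v.
  case: (boolP ((0 < v) && (v <= a))) => /andP Hv.
    have := congr1 (fun s => nth false s (a - v)) E.
    rewrite !nth_gseq; try lia.
    have -> : (a - v < a) = true by lia.
    rewrite subKn; last lia.
    by move/negb_inj.
  have F : forall c : seq (nat * nat), all (fun c => 0 < c.2 <= a) c -> (v \in map snd c) = false.
    move=> c Hc; apply/negP => /mapP [[x y] Hxy E0] /=.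
    by have := allP Hc _ Hxy => /= H; apply: Hv; rewrite E0 /=; lia.
  by rewrite !F.
by rewrite -[cs]zip_unzip -[cs']zip_unzip /unzip1 /unzip2 EX EY.
Qed.

From HB Require Import structures.

Definition corners (P : seq bool) := cor false 0 0 P.

Lemma corners_ok P : inv_ok (count id P) (count negb P) (corners P).
Proof.
have [A B C D] := cor_inv false 0 0 P.
by rewrite /inv_ok A B /= C D.
Qed.

Lemma Peak_corners P : Peak P = map (fun c => c.1 + c.2) (corners P).
Proof. by rewrite /corners cor_sum /= map_id_in. Qed.

Lemma head_g P :
  head false (gseq (count id P) (count negb P) (corners P)) = last false P.
Proof.
have Hok := corners_ok P.
case: (posnP (count id P)) => Ha.
  have -> : corners P = [::].
    case: (corners P) Hok => // c r /and4P[_ _ _] /=; rewrite Ha; lia.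
  rewrite last_noN; last by rewrite has_count Ha.
  rewrite -nth0; case: (posnP (count id P + count negb P)) => H.
    by rewrite nth_default // size_gseq H.
  by rewrite nth_gseq // Ha.
rewrite -nth0 nth_gseq; last lia.
rewrite ifT // subn0.
have := cor_last false 0 0 P; rewrite add0n /= /corners => ->.
have Hh : has id P by rewrite has_count.
rewrite Hh /=.
by case: P Hh {Hok Ha} => //= x s _; rewrite negbK.
Qed.

Section Fin.
Variables a b : nat.
Definition YP := Ypath a b.
HB.instance Definition _ := Countable.on YP.
Lemma size_YP (P : YP) : size (val P) == a + b.
Proof.
case: P => p /= /andP[/eqP <- /eqP <-]. by rewrite (count_predC id).
Qed.
Definition toT (P : YP) : (a + b).-tuple bool := Tuple (size_YP P).
Definition ofT (t : (a + b).-tuple bool) : option YP := insub (val t).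
Lemma toTK : pcancel toT ofT.
Proof. move=> P; rewrite /ofT /toT /=. exact: valK. Qed.
HB.instance Definition YP_fin : isFinite YP := PCanIsFinite toTK.
Lemma injbij (f : YP -> YP) : injective f -> bijective f.
Proof. move=> H. exact: (@injF_bij YP f H). Qed.

Lemma g_ok (P : YP) :
  (count id (gseq a b (corners (val P))) == a) && (count negb (gseq a b (corners (val P))) == b).
Proof.
case: P => p /= /andP[/eqP Ha /eqP Hb].
have := corners_ok p; rewrite Ha Hb => /gseq_main [_ [-> ->]].
by rewrite !eqxx.
Qed.

Definition gY (P : YP) : YP := exist _ (gseq a b (corners (val P))) (g_ok P).

Lemma gY_inj : injective gY.
Proof.
move=> [p Hp] [p' Hp'] E.
have E1 : gseq a b (corners p) = gseq a b (corners p') by move: (congr1 val E).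
apply: val_inj => /=; clear E.
move: (Hp) (Hp') E1 => /andP[/eqP Ha /eqP Hb] /andP[/eqP Ha' /eqP Hb'] E1.
have Hc : corners p = corners p'.
  apply: (gseq_inj _ _ E1).
    by rewrite -Ha -Hb; apply: corners_ok.
  by rewrite -Ha' -Hb'; apply: corners_ok.
apply: (cor_inj Hc); lia.
Qed.
End Fin.

Theorem mainTheorem10 (a b : nat) :
  exists g : Ypath a b -> Ypath a b,
    bijective g /\
    forall P : Ypath a b,
      Peak (val P) =i hd (val (g P)) /\
      Peak_star (val P) =i hd_star (val (g P)).
Proof.
exists (@gY a b); split; first exact: injbij (@gY_inj a b).
move=> [p Hp] /=.
move: (Hp) => /andP[/eqP Ha /eqP Hb].
have Hok := corners_ok p.
have [H1 _] := gseq_main Hok.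
have Hhead := head_g p.
rewrite Ha Hb in H1 Hhead.
have Hsize : size (gseq a b (corners p)) = size p.
  by rewrite size_gseq -Ha -Hb (count_predC id).
split=> v.
  by rewrite H1 mem_rev Peak_corners.
rewrite /Peak_star /hd_star Peak_rcons Hhead Hsize H1.
case: (last false p); rewrite mem_cat ?mem_rcons ?in_cons mem_rev Peak_corners //.
  by rewrite in_nil orbF orbC.
by rewrite in_nil orbF.
Qed.
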